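(* Let $(q_i,k_i,v_i)_{i=1}^n$ be vectors in $\mathbb{R}^d$, $A_{ij}=\exp(\langle q_i,k_j\rangle/\sqrt d)$, $V\in\mathbb{R}^{n\times d}$ with rows $v_i^\top$, $D=\mathrm{diag}(A\mathbf{1}_n)$, let $I_{\mathrm{out}}\subseteq[n]$ be nonempty with $|I_{\mathrm{out}}|=n_{\mathrm{out}}$, and define $\hat A=\frac{n}{n_{\mathrm{out}}}\big(A_{ij}\mathbf{1}\{j\in I_{\mathrm{out}}\}\big)_{i,j=1}^n$ and $\hat D=\mathrm{diag}(\hat A\mathbf{1}_n)$. Then $$\|\hat D^{-1}\hat AV-D^{-1}AV\|_{\max}\le\min\Big(\big\|(\tfrac1nD)^{-1}\big\|_{\max},\big\|(\tfrac1n\hat D)^{-1}\big\|_{\max}\Big)\Big(\frac1n\|\hat AV-AV\|_{\max}+\frac1n\|A\mathbf{1}_n-\hat A\mathbf{1}_n\|_\infty\|V\|_{\max}\Big).$$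
   Context: $\|M\|_{\max}$ denotes the largest absolute entry of a matrix $M$ and $\|\cdot\|_\infty$ the largest absolute entry of a vector. *)

(* Defs.v *)
From HB Require Import structures.
From mathcomp Require Import all_boot all_order all_algebra.
From mathcomp Require Import all_classical all_reals all_analysis.
Set Implicit Arguments. Unset Strict Implicit. Unset Printing Implicit Defensive.
Import Order.TTheory GRing.Theory Num.Theory.
Local Open Scope ring_scope.

(* ||M||_max : largest absolute entry (0 for empty matrices).
   For a column vector this is the sup-norm ||.||_infty. *)
Definition mxmax (R : realType) (m n : nat) (M : 'M[R]_(m, n)) : R :=
  \big[Num.max/0]_(i < m) \big[Num.max/0]_(j < n) `|M i j|.

Definition ones (R : realType) (n : nat) : 'cV[R]_n := const_mx 1.

Definition diagc (R : realType) (n : nat) (x : 'cV[R]_n) : 'M[R]_n :=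
  diag_mx x^T.

Definition attnA (R : realType) (n d : nat) (Q K : 'M[R]_(n, d)) : 'M[R]_n :=
  \matrix_(i < n, j < n)
     expR ((\sum_(l < d) Q i l * K j l) / Num.sqrt (d%:R)).

Definition attnAhat (R : realType) (n : nat) (A : 'M[R]_n) (Iout : {set 'I_n})
  : 'M[R]_n :=
  (n%:R / #|Iout|%:R) *: \matrix_(i < n, j < n) (if j \in Iout then A i j else 0).

(* Main.v *)
Require Import Defs.
From HB Require Import structures.
From mathcomp Require Import all_boot all_order all_algebra.
From mathcomp Require Import all_classical all_reals all_analysis.
From mathcomp Require Import ring lra.
Import Order.TTheory GRing.Theory Num.Theory.
Set Implicit Arguments. Unset Strict Implicit.
Local Open Scope ring_scope.

Section H.
Variable R : realType.

Lemma mxmax_ge0 m n (M : 'M[R]_(m, n)) : 0 <= mxmax M.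
Proof.
rewrite /mxmax; apply: (big_ind (fun x => 0 <= x)) => //.
- by move=> x y hx hy; rewrite le_max hx.
- move=> i _; apply: (big_ind (fun x => 0 <= x)) => //.
  by move=> x y hx hy; rewrite le_max hx.
Qed.

Lemma mxmax_entry m n (M : 'M[R]_(m, n)) i j : `|M i j| <= mxmax M.
Proof.
rewrite /mxmax (bigD1 i) //= le_max; apply/orP; left.
rewrite (bigD1 j) //= le_max lexx //.
Qed.

Lemma invmx_diag n (d : 'rV[R]_n) : (forall j, d 0 j != 0) ->
  invmx (diag_mx d) = diag_mx (\row_j (d 0 j)^-1).
Proof.
move=> hd.
have h1 : diag_mx (\row_j (d 0 j)^-1) *m diag_mx d = 1%:M.
  rewrite mulmx_diag; apply/matrixP => i j; rewrite !mxE.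
  by case: eqP => // _; rewrite mulVf.
have [_ hu] := mulmx1_unit h1.
by rewrite -[RHS]mulmx1 -(mulmxV hu) mulmxA h1 mul1mx.
Qed.

Lemma scale_diag n (c : R) (d : 'rV[R]_n) : c *: diag_mx d = diag_mx (c *: d).
Proof. by apply/matrixP => i j; rewrite !mxE mulrnAr. Qed.

Lemma entry_inv n (x : 'cV[R]_n) (hx : forall i, x i 0 != 0) m
   (M : 'M[R]_n) (V : 'M[R]_(n, m)) i l :
  (invmx (diagc x) *m M *m V) i l = (x i 0)^-1 * (M *m V) i l.
Proof.
rewrite /diagc invmx_diag; last by move=> j; rewrite mxE.
by rewrite -mulmxA mul_diag_mx !mxE.
Qed.

Lemma inv_scaled n (x : 'cV[R]_n) (hx : forall i, x i 0 != 0) (hn : (0 < n)%N) i :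
  n%:R / x i 0 <= mxmax (invmx ((n%:R)^-1 *: diagc x)).
Proof.
have := @mxmax_entry _ _ (invmx ((n%:R)^-1 *: diagc x)) i i; apply: le_trans.
rewrite /diagc scale_diag invmx_diag; last first.
  by move=> j; rewrite !mxE mulf_neq0 // invr_eq0 pnatr_eq0 -lt0n.
rewrite !mxE eqxx mulr1n invfM invrK.
by rewrite ler_norm.
Qed.

Lemma key (a b p q E F Vm c : R) : 0 < a -> 0 < b -> 0 < c ->
  `|p| <= b * Vm -> `|q| <= a * Vm -> `|p - q| <= E -> `|a - b| <= F ->
  `|p / b - q / a| <= (c / b) * (c^-1 * E + c^-1 * F * Vm) /\
  `|p / b - q / a| <= (c / a) * (c^-1 * E + c^-1 * F * Vm).
Proof.
move=> ha hb hc hp hq hE hF.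
have e1 : c / b * (c^-1 * E + c^-1 * F * Vm) = E / b + F * Vm / b.
  by field; rewrite ?gt_eqF.
have e2 : c / a * (c^-1 * E + c^-1 * F * Vm) = E / a + F * Vm / a.
  by field; rewrite ?gt_eqF.
have na : `|a^-1| = a^-1 by rewrite ger0_norm // invr_ge0 ltW.
have nb : `|b^-1| = b^-1 by rewrite ger0_norm // invr_ge0 ltW.
have nab : `|(a * b)^-1| = (a * b)^-1 by rewrite ger0_norm // invr_ge0 mulr_ge0 // ltW.
have ia : 0 <= a^-1 by rewrite invr_ge0 ltW.
have ib : 0 <= b^-1 by rewrite invr_ge0 ltW.
have e3 : a * Vm * F * (a * b)^-1 = F * Vm / b by field; rewrite ?gt_eqF.
have e4 : b * Vm * F * (a * b)^-1 = F * Vm / a by field; rewrite ?gt_eqF.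
rewrite e1 e2; split.
- have -> : p / b - q / a = (p - q) / b + q * (a - b) / (a * b).
    by field; rewrite ?gt_eqF.
  apply: le_trans (ler_normD _ _) _.
  apply: lerD.
    by rewrite normrM nb; apply: ler_wpM2r.
  rewrite !normrM nab -e3; apply: ler_wpM2r; first by rewrite invr_ge0 mulr_ge0 // ltW.
  exact: (ler_pM (normr_ge0 _) (normr_ge0 _) hq hF).
- have -> : p / b - q / a = (p - q) / a + p * (a - b) / (a * b).
    by field; rewrite ?gt_eqF.
  apply: le_trans (ler_normD _ _) _.
  apply: lerD.
    by rewrite normrM na; apply: ler_wpM2r.
  rewrite !normrM nab -e4; apply: ler_wpM2r; first by rewrite invr_ge0 mulr_ge0 // ltW.
  exact: (ler_pM (normr_ge0 _) (normr_ge0 _) hp hF).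
Qed.

Lemma mxmax_le m n (M : 'M[R]_(m, n)) c : 0 <= c ->
  (forall i j, `|M i j| <= c) -> mxmax M <= c.
Proof.
move=> hc hM; rewrite /mxmax; apply: (big_ind (fun x => x <= c)) => //.
- by move=> x y hx hy; rewrite ge_max hx.
- move=> i _; apply: (big_ind (fun x => x <= c)) => //.
  by move=> x y hx hy; rewrite ge_max hx.
Qed.

Lemma mul_ones n (M : 'M[R]_n) i : (M *m ones R n) i 0 = \sum_j M i j.
Proof. by rewrite mxE; apply: eq_bigr => j _; rewrite mxE mulr1. Qed.

Lemma mulV_bound n m (M : 'M[R]_n) (V : 'M[R]_(n, m)) i l :
  (forall j, 0 <= M i j) -> `|(M *m V) i l| <= (M *m ones R n) i 0 * mxmax V.
Proof.
move=> hM; rewrite mul_ones mxE mulr_suml.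
apply: le_trans (ler_norm_sum _ _ _) _; apply: ler_sum => j _.
by rewrite normrM ger0_norm // ler_wpM2l // mxmax_entry.
Qed.
End H.

Theorem lemmaF1 (R : realType) (n d : nat) (Q K V : 'M[R]_(n, d))
    (Iout : {set 'I_n}) (hI : (0 < #|Iout|)%N) :
  let A := attnA Q K in
  let Ah := attnAhat A Iout in
  let D := diagc (A *m ones R n) in
  let Dh := diagc (Ah *m ones R n) in
  mxmax (invmx Dh *m Ah *m V - invmx D *m A *m V)
  <= Num.min (mxmax (invmx ((n%:R)^-1 *: D))) (mxmax (invmx ((n%:R)^-1 *: Dh)))
     * ((n%:R)^-1 * mxmax (Ah *m V - A *m V)
        + (n%:R)^-1 * mxmax (A *m ones R n - Ah *m ones R n) * mxmax V).
Proof.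
cbv zeta.
set A := attnA Q K.
set Ah := attnAhat A Iout.
have [j0 j0I] : exists j0, j0 \in Iout.
  by move: hI; rewrite card_gt0 => /set0Pn.
have hn : (0 < n)%N by case: (n) j0 {j0I} => [[]|].
have hnR : 0 < (n%:R : R) by rewrite ltr0n.
have Apos : forall i j, 0 < A i j by move=> i j; rewrite mxE expR_gt0.
have cpos : 0 < (n%:R / #|Iout|%:R : R) by rewrite divr_gt0 // ltr0n.
have Ahge0 : forall i j, 0 <= Ah i j.
  move=> i j; rewrite !mxE; apply: mulr_ge0; first exact: ltW.
  by case: ifP => _ //; apply: ltW; rewrite expR_gt0.
have apos : forall i, 0 < (A *m ones R n) i 0.
  move=> i; rewrite mul_ones (bigD1 j0) //= ltr_pwDl //.
  by apply: sumr_ge0 => j _; rewrite ltW.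
have bpos : forall i, 0 < (Ah *m ones R n) i 0.
  move=> i; rewrite mul_ones (bigD1 j0) //=; apply: ltr_pwDl.
    by rewrite !mxE j0I mulr_gt0 //; have := Apos i j0; rewrite mxE.
  by apply: sumr_ge0 => j _.
set S := (_ * _ + _).
have S0 : 0 <= S.
  rewrite /S addr_ge0 // ?mulr_ge0 ?invr_ge0 ?ler0n ?mxmax_ge0 //.
apply: mxmax_le.
  by rewrite mulr_ge0 // le_min !mxmax_ge0.
move=> i l.
have hx1 : forall i, (A *m ones R n) i 0 != 0 by move=> k; rewrite gt_eqF.
have hx2 : forall i, (Ah *m ones R n) i 0 != 0 by move=> k; rewrite gt_eqF.
rewrite {1}mxE (entry_inv hx2) [X in _ + X]mxE (entry_inv hx1).
rewrite ![_^-1 * _]mulrC.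
have hE : `|(Ah *m V) i l - (A *m V) i l| <= mxmax (Ah *m V - A *m V).
  have := mxmax_entry (Ah *m V - A *m V) i l.
  by rewrite (_ : (Ah *m V - A *m V) i l = (Ah *m V) i l - (A *m V) i l) // !mxE.
have hF : `|(A *m ones R n) i 0 - (Ah *m ones R n) i 0|
    <= mxmax (A *m ones R n - Ah *m ones R n).
  have := mxmax_entry (A *m ones R n - Ah *m ones R n) i 0.
  by rewrite (_ : (A *m ones R n - Ah *m ones R n) i 0 =
     (A *m ones R n) i 0 - (Ah *m ones R n) i 0) // !mxE.
have [k1 k2] := key (c := n%:R) (apos i) (bpos i) hnR
  (mulV_bound V l (Ahge0 i)) (mulV_bound V l (fun j => ltW (Apos i j)))
  hE hF.
rewrite minr_pMl // le_min; apply/andP; split.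
- apply: le_trans k2 _; apply: ler_wpM2r => //.
  exact: (inv_scaled hx1 hn).
- apply: le_trans k1 _; apply: ler_wpM2r => //.
  exact: (inv_scaled hx2 hn).
Qed.
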